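(* Let $\mathcal{A}\in\mathbb{R}^{d_1\times\cdots\times d_k}$ be an arbitrary order-$k$ real tensor and let $\pi_1,\pi_2\in\mathcal{P}_{[k]}$ be any two partitions (not necessarily comparable). Then \[ \left[\frac{\dim(\mathcal{A})}{\dim_{\mathcal{A}}(\pi_1,\pi_2)}\right]^{-1/2}\|\mathrm{Unfold}_{\pi_1}(\mathcal{A})\|_\sigma\le \|\mathrm{Unfold}_{\pi_2}(\mathcal{A})\|_\sigma\le \left[\frac{\dim(\mathcal{A})}{\dim_{\mathcal{A}}(\pi_2,\pi_1)}\right]^{1/2}\|\mathrm{Unfold}_{\pi_1}(\mathcal{A})\|_\sigma . \]
   Context: $\dim(\mathcal{A})=\prod_{n=1}^k d_n$. For a real tensor $\mathcal{T}\in\mathbb{R}^{e_1\times\cdots\times e_m}$, $\|\mathcal{T}\|_\sigma=\sup\{\sum t_{i_1\dots i_m}x^{(1)}_{i_1}\cdots x^{(m)}_{i_m}:\ \mathbf{x}_n\in\mathbb{R}^{e_n},\ \|\mathbf{x}_n\|_2=1\}$ (spectral norm). $\mathcal{P}_{[k]}$ is the set of partitions of $[k]=\{1,\dots,k\}$. Unfolding: for $\pi=\{B_1,\dots,B_\ell\}\in\mathcal{P}_{[k]}$, $\mathrm{Unfold}_\pi(\mathcal{A})$ is the order-$\ell$ tensor of dimensions $(\prod_{j\in B_1}d_j,\dots,\prod_{j\in B_\ell}d_j)$ whose entry at $(m_1,\dots,m_\ell)$ is $a_{i_1\dots i_k}$, where $m_j$ corresponds to $(i_r)_{r\in B_j}$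 under a fixed bijection $\prod_{r\in B_j}[d_r]\to[\prod_{r\in B_j}d_r]$. For $\pi_1,\pi_2\in\mathcal{P}_{[k]}$ define $\dim_{\mathcal{A}}(\pi_1,\pi_2)=\prod_{B\in\pi_1}\max_{B'\in\pi_2}D_{\mathcal{A}}(B,B')$, where $D_{\mathcal{A}}(B,B')=\prod_{n\in B\cap B'}d_n$ if $B\cap B'\neq\emptyset$ and $D_{\mathcal{A}}(B,B')=0$ if $B\cap B'=\emptyset$. *)

(* Defs.v *)
From HB Require Import structures.
From mathcomp Require Import all_boot all_order all_algebra.
From mathcomp Require Import reals.
Set Implicit Arguments. Unset Strict Implicit. Unset Printing Implicit Defensive.
Import Order.TTheory GRing.Theory Num.Theory.
Local Open Scope ring_scope.

Definition tidx (m : nat) (e : 'I_m -> nat) := {dffun forall j : 'I_m, 'I_(e j)}.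

Definition spec_norm (R : realType) (m : nat) (e : 'I_m -> nat)
    (T : tidx e -> R) : R :=
  sup ((fun s : R => exists x : forall j : 'I_m, 'I_(e j) -> R,
         (forall j, Num.sqrt (\sum_(l < e j) x j l ^+ 2) = 1) /\
         s = \sum_(i : tidx e) T i * \prod_(j < m) x j (i j))).

Definition tdim (k : nat) (d : 'I_k -> nat) : nat := (\prod_(n < k) d n)%N.

Definition DA (k : nat) (d : 'I_k -> nat) (B B' : {set 'I_k}) : nat :=
  if B :&: B' == set0 then 0%N else (\prod_(n in B :&: B') d n)%N.

Definition dimA (k : nat) (d : 'I_k -> nat) (p1 p2 : {set {set 'I_k}}) : nat :=
  (\prod_(B in p1) \max_(B' in p2) DA d B B')%N.

Definition blk (k : nat) (p : {set {set 'I_k}}) (j : 'I_#|p|) : {set 'I_k} :=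
  enum_val j.

Definition ridx (k : nat) (d : 'I_k -> nat) (B : {set 'I_k}) :=
  {dffun forall r : {r : 'I_k | r \in B}, 'I_(d (val r))}.

Definition restrict (k : nat) (d : 'I_k -> nat) (B : {set 'I_k})
    (i : tidx d) : ridx d B :=
  [ffun r : {r : 'I_k | r \in B} => i (val r)].

Definition udims (k : nat) (d : 'I_k -> nat) (p : {set {set 'I_k}})
    (j : 'I_#|p|) : nat := #|ridx d (@blk k p j)|.

(* Unfold_pi(A): entry at (m_1,...,m_l) is a_i, where m_j corresponds to
   (i_r)_{r in B_j} under the fixed bijection enum_rank.  For a partition p
   there is exactly one such i, so the sum below has exactly one term. *)
Definition unfold (R : realType) (k : nat) (d : 'I_k -> nat)
    (p : {set {set 'I_k}}) (A : tidx d -> R) : tidx (@udims k d p) -> R :=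
  fun m => \sum_(i : tidx d | [forall j : 'I_#|p|,
                 m j == enum_rank (@restrict k d (@blk k p j) i)]) A i.

Arguments blk {k} p j.
Arguments udims {k} d p j.
Arguments restrict {k} d B i.
Arguments unfold {R k d} p A _.
Arguments spec_norm {R m e} T.

(* Main.v *)
Require Import Defs.
From HB Require Import structures.
From mathcomp Require Import all_boot all_order all_algebra.
From mathcomp Require Import reals.
From mathcomp Require Import ring lra.
Import Order.TTheory GRing.Theory Num.Theory.
Local Open Scope ring_scope.
Set Implicit Arguments. Unset Strict Implicit. Unset Printing Implicit Defensive.

Section Aux.
Variables (R : realType) (k : nat) (d : 'I_k -> nat).
Implicit Types (S T : {set 'I_k}) (e z c : tidx d).

Definition agr S e z : bool := [forall n, (n \in S) || (e n == z n)].
Definition mrg S (a c : tidx d) : tidx d :=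
  finfun (fun n => if n \in S then a n else c n).
Definition dep S (h : tidx d -> R) :=
  forall e e', (forall n, n \in S -> e n = e' n) -> h e = h e'.

Lemma mrgE S a c n : mrg S a c n = if n \in S then a n else c n.
Proof. by rewrite /mrg ffunE. Qed.

Lemma agrP S e z : reflect (forall n, n \notin S -> e n = z n) (agr S e z).
Proof.
apply: (iffP forallP) => H n.
  by move=> nS; move: (H n); rewrite (negbTE nS) => /eqP.
by case: (boolP (n \in S)) => //= nS; rewrite H.
Qed.

Definition ext S z (r : ridx d S) : tidx d :=
  finfun (fun n => (if n \in S as b return (n \in S = b -> 'I_(d n))
     then fun h => r (exist _ n h) else fun _ => z n) (erefl (n \in S))).

Arguments ext : clear implicits.
Lemma ext_in S z r n (h : n \in S) : ext S z r n = r (exist _ n h).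
Proof.
rewrite /ext ffunE.
suff E : forall (b : bool) (e : (n \in S) = b),
  (if b as b' return ((n \in S) = b' -> 'I_(d n)) then fun h => r (exist _ n h)
   else fun _ => z n) e = r (exist _ n h) by apply: E.
case=> e; first by rewrite (bool_irrelevance e h).
by exfalso; move: e; rewrite h.
Qed.

Lemma ext_out S z r n : n \notin S -> ext S z r n = z n.
Proof.
move=> nS; rewrite /ext ffunE.
suff E : forall (b : bool) (e : (n \in S) = b),
  (if b as b' return ((n \in S) = b' -> 'I_(d n)) then fun h => r (exist _ n h)
   else fun _ => z n) e = z n by apply: E.
by case=> e //; exfalso; move: nS; rewrite e.
Qed.

Lemma restrict_ext S z r : restrict d S (ext S z r) = r.
Proof. by apply/ffunP => -[n h]; rewrite ffunE /= (ext_in _ _ h). Qed.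

Lemma ext_restrict S z c : agr S c z -> ext S z (restrict d S c) = c.
Proof.
move/agrP => H; apply/ffunP => n; case: (boolP (n \in S)) => nS.
  by rewrite (ext_in _ _ nS) ffunE.
by rewrite ext_out // H.
Qed.

Lemma sum_ridx S z (H : ridx d S -> R) :
  \sum_(r : ridx d S) H r = \sum_(c | agr S c z) H (restrict d S c).
Proof.
rewrite (reindex_onto (restrict d S) (ext S z)) /=; last by move=> r _; rewrite restrict_ext.
apply: eq_bigl => c; apply/eqP/idP => [<-|/ext_restrict //].
by apply/agrP => n nS; rewrite ext_out.
Qed.

Lemma sum_merge S1 S2 z (F : tidx d -> R) :
  (forall n, n \in S1 -> n \notin S2) ->
  \sum_(e | agr (S1 :|: S2) e z) F e =
  \sum_(e1 | agr S1 e1 z) \sum_(e2 | agr S2 e2 z) F (mrg S1 e1 e2).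
Proof.
move=> dis; rewrite pair_big_dep /=.
rewrite (reindex_onto (fun p : tidx d * tidx d => mrg S1 p.1 p.2)
   (fun e => (mrg S1 e z, mrg S1 z e))) /=; last first.
  by move=> e _; apply/ffunP => n; rewrite !mrgE; case: (n \in S1).
apply: eq_bigl => -[e1 e2] /=; rewrite xpair_eqE.
apply/andP/andP => [[/agrP H1 /andP[/eqP E1 /eqP E2]] | [/agrP H1 /agrP H2]].
  split; apply/agrP => n nS.
    by move/ffunP: E1 => /(_ n); rewrite !mrgE (negbTE nS) => <-.
  case: (boolP (n \in S1)) => nS1.
    by move/ffunP: E2 => /(_ n); rewrite !mrgE nS1 => <-.
  by rewrite -H1 ?mrgE ?(negbTE nS1) // in_setU negb_or nS1.
split.
  apply/agrP => n; rewrite in_setU negb_or => /andP[n1 n2].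
  by rewrite mrgE (negbTE n1) H2.
apply/andP; split; apply/eqP/ffunP => n; rewrite !mrgE;
  case: (boolP (n \in S1)) => nS1 //.
  by rewrite H1.
by rewrite H2 // dis.
Qed.

Lemma agr0 z e : agr set0 e z = (e == z).
Proof.
apply/agrP/eqP => [H|->//]; apply/ffunP => n; by rewrite H ?inE.
Qed.

Lemma mem_bigcup_seq (I : eqType) (r : seq I) (W : I -> {set 'I_k}) n :
  (n \in \bigcup_(a <- r) W a) = has (fun a => n \in W a) r.
Proof. by elim: r => [|a r IH]; rewrite ?big_nil ?big_cons ?inE //= IH. Qed.

Lemma sum_prod_seq (I : eqType) (r : seq I) (W : I -> {set 'I_k})
    (h : I -> tidx d -> R) z :
  uniq r -> (forall a b, a \in r -> b \in r -> a != b -> forall n, n \in W a -> n \notin W b) ->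
  (forall a, a \in r -> dep (W a) (h a)) ->
  \sum_(e | agr (\bigcup_(a <- r) W a) e z) \prod_(a <- r) h a e =
  \prod_(a <- r) \sum_(e | agr (W a) e z) h a e.
Proof.
elim: r => [|a r IH] /=.
  move=> _ _ _; rewrite !big_nil.
  by rewrite (eq_bigl (fun e => e == z)) ?big_pred1_eq ?big_nil // => e; rewrite agr0.
move=> /andP[ar ur] dis dh.
rewrite big_cons big_cons sum_merge; last first.
  move=> n na; apply/negP; rewrite mem_bigcup_seq => /hasP[b br nb].
  have ab : a != b by apply: contraNneq ar => ->.
  by move: (dis a b (mem_head _ _) (introT orP (or_intror br)) ab n na); rewrite nb.
rewrite -IH //; last first.
  - by move=> b bi; apply: dh; rewrite inE bi orbT.
  - by move=> b c bi ci; apply: dis; rewrite inE ?bi ?ci orbT.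
rewrite big_distrl /=; apply: eq_bigr => e1 _.
rewrite big_distrr /=; apply: eq_bigr => e2 _.
rewrite big_cons; congr (_ * _).
  by apply: (dh a (mem_head _ _)) => n na; rewrite mrgE na.
apply: eq_big_seq => b br.
apply: (dh b); first by rewrite inE br orbT.
move=> n nb; rewrite mrgE.
have ab : a != b by apply: contraNneq ar => ->.
have := dis b a (introT orP (or_intror br)) (mem_head _ _); rewrite eq_sym ab => /(_ isT n nb) /negbTE -> //.
Qed.

Lemma sum_prod_fin (I : finType) (P : pred I) (W : I -> {set 'I_k})
    (h : I -> tidx d -> R) z :
  (forall a b, P a -> P b -> a != b -> forall n, n \in W a -> n \notin W b) ->
  (forall a, P a -> dep (W a) (h a)) ->
  \sum_(e | agr (\bigcup_(a | P a) W a) e z) \prod_(a | P a) h a e =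
  \prod_(a | P a) \sum_(e | agr (W a) e z) h a e.
Proof.
move=> dis dh.
have E : \bigcup_(a | P a) W a = \bigcup_(a <- [seq a <- index_enum I | P a]) W a.
  by rewrite big_filter.
have L : forall F : I -> R, \prod_(a | P a) F a = \prod_(a <- [seq a <- index_enum I | P a]) F a.
  by move=> F; rewrite big_filter.
rewrite E (eq_bigr _ (fun e _ => L (fun a => h a e))) L.
apply: sum_prod_seq.
- by rewrite filter_uniq // index_enum_uniq.
- by move=> a b; rewrite !mem_filter => /andP[Pa _] /andP[Pb _]; apply: dis.
- by move=> a; rewrite mem_filter => /andP[Pa _]; apply: dh.
Qed.

Lemma sum_single n z : \sum_(e | agr [set n] e z) (1 : R) = (d n)%:R.
Proof.
pose hh := fun x : 'I_(d n) =>
  (finfun (@dfwith _ (fun m => 'I_(d m)) (fun m => z m) n x) : tidx d).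
rewrite (reindex_onto hh (fun e => e n)) /=; last first.
  move=> e /agrP He; apply/ffunP => m; rewrite ffunE.
  case: dfwithP => // m' nm'; rewrite He // inE eq_sym //.
rewrite (eq_bigl predT) ?sumr_const ?card_ord // => x.
rewrite /hh ffunE dfwith_in eqxx andbT.
by apply/agrP => m; rewrite inE => mn; rewrite ffunE dfwith_out // eq_sym.
Qed.

Lemma card_agr S z : \sum_(e | agr S e z) (1 : R) = (\prod_(n in S) d n)%:R.
Proof.
have E : S = \bigcup_(n in S) [set n].
  apply/setP => n; apply/idP/bigcupP => [nS|[m mS]]; first by exists n; rewrite ?inE.
  by rewrite inE => /eqP ->.
rewrite natr_prod -[in RHS](eq_bigr _ (fun n _ => sum_single n z)).
rewrite -sum_prod_fin.
- by rewrite -E; apply: eq_bigr => e _; rewrite big1_eq.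
- move=> a b _ _ ab n; rewrite !inE => /eqP ->; by [].
- by move=> a _ e e' _.
Qed.
End Aux.
Arguments ext {k d} S z r.

Section Bridge.
Variables (R : realType) (k : nat) (d : 'I_k -> nat) (A : tidx d -> R) (z : tidx d).

Definition nrm S (g : tidx d -> R) := \sum_(c | agr S c z) g c ^+ 2.
Definition valp (p : {set {set 'I_k}}) (f : 'I_#|p| -> tidx d -> R) :=
  \sum_i A i * \prod_j f j i.
Definition Sv (p : {set {set 'I_k}}) : R -> Prop := fun s =>
  exists f : 'I_#|p| -> tidx d -> R, (forall j, dep (blk p j) (f j)) /\
     (forall j, nrm (blk p j) (f j) = 1) /\ s = valp f.

Lemma unfold_val (p : {set {set 'I_k}}) (x : forall j : 'I_#|p|, 'I_(udims d p j) -> R) :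
  \sum_(m : tidx (udims d p)) unfold p A m * \prod_j x j (m j) =
  \sum_i A i * \prod_j x j (enum_rank (restrict d (blk p j) i)).
Proof.
rewrite /unfold; under eq_bigr do rewrite big_distrl big_mkcond /=.
rewrite exchange_big /=; apply: eq_bigr => i _.
pose mk := (finfun (fun j => enum_rank (restrict d (blk p j) i)) : tidx (udims d p)).
rewrite -big_mkcond /= (eq_bigl (fun m => m == mk)) ?big_pred1_eq.
  by congr (_ * _); apply: eq_bigr => j _; rewrite ffunE.
move=> m; apply/forallP/eqP => [H|->] ; last by move=> j; rewrite ffunE.
by apply/ffunP => j; rewrite ffunE; apply/eqP.
Qed.

Lemma sum_ord_ridx S (G : 'I_#|ridx d S| -> R) :
  \sum_(l < #|ridx d S|) G l = \sum_(c | agr S c z) G (enum_rank (restrict d S c)).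
Proof.
rewrite -(sum_ridx z (fun r => G (enum_rank r))).
rewrite (reindex (@enum_rank (ridx d S))) //.
by exists enum_val => l _; [exact: enum_rankK | exact: enum_valK].
Qed.

Lemma spec_Sv (p : {set {set 'I_k}}) : spec_norm (unfold p A) = sup (Sv p).
Proof.
rewrite /spec_norm; congr sup; apply: boolp.funext => s; apply: boolp.propext; split.
  move=> [x [Hx ->]].
  exists (fun j c => x j (enum_rank (restrict d (blk p j) c))); split; [|split].
  - move=> j e e' H; congr (x j (enum_rank _)); apply/ffunP => -[n h].
    by rewrite !ffunE /=; apply: H.
  - move=> j; rewrite /nrm -(sum_ord_ridx (S := blk p j) (fun l => x j l ^+ 2)).
    have := Hx j => /(congr1 (fun t => t ^+ 2)); rewrite sqr_sqrtr ?expr1n //.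
    by apply: sumr_ge0 => l _; apply: sqr_ge0.
  - by rewrite unfold_val.
move=> [f [Hd [Hn ->]]].
exists (fun j l => f j (ext (blk p j) z (enum_val l))); split.
  move=> j; rewrite (sum_ord_ridx (S := blk p j) (fun l => f j (ext (blk p j) z (enum_val l)) ^+ 2)).
  under eq_bigr => c Hc do rewrite enum_rankK ext_restrict //.
  by rewrite -/(nrm _ _) Hn sqrtr1.
rewrite (unfold_val (fun j l => f j (ext (blk p j) z (enum_val l)))) /valp.
apply: eq_bigr => i _; congr (_ * _).
apply: eq_bigr => j _; rewrite enum_rankK; apply: Hd => n h.
by rewrite (ext_in _ _ h) ffunE.
Qed.

Lemma agr_pin S w c : agr S c z && agr (~: S) c w = (c == mrg S w z).
Proof.
apply/andP/eqP => [[/agrP H1 /agrP H2]| ->].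
  apply/ffunP => n; rewrite mrgE; case: (boolP (n \in S)) => nS.
    by apply: H2; rewrite inE nS.
  exact: H1.
split; apply/agrP => n; rewrite mrgE; first by move/negbTE ->.
by rewrite inE negbK => ->.
Qed.

Lemma sum_pinned S w (F : tidx d -> R) :
  \sum_(c | agr S c z) (agr (~: S) c w)%:R * F c = F (mrg S w z).
Proof.
rewrite (bigID (fun c => agr (~: S) c w)) /=.
rewrite [X in _ + X]big1 ?addr0; last by move=> c /andP[_ /negbTE ->]; rewrite mul0r.
rewrite (eq_bigl (fun c => c == mrg S w z)) ?big_pred1_eq; last by move=> c; rewrite agr_pin.
by have := agr_pin S w (mrg S w z); rewrite eqxx => /andP[_ ->]; rewrite mul1r.
Qed.

Lemma sq_le_nrm S g c : agr S c z -> g c ^+ 2 <= nrm S g.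
Proof.
move=> Hc; rewrite /nrm (bigD1 c) //= lerDl.
by apply: sumr_ge0 => e _; apply: sqr_ge0.
Qed.

Lemma mrg_agr S i : agr S (mrg S i z) z.
Proof. by apply/agrP => n nS; rewrite mrgE (negbTE nS). Qed.

Lemma unit_le1 S g i : dep S g -> nrm S g = 1 -> `|g i| <= 1.
Proof.
move=> Hd Hn; have E : g i = g (mrg S i z).
  by apply: Hd => n nS; rewrite mrgE nS.
have := sq_le_nrm g (mrg_agr S i); rewrite Hn -E.
case: (ger0P (g i)) => _ H; nra.
Qed.

Lemma Sv_ub (p : {set {set 'I_k}}) s : Sv p s -> s <= \sum_i `|A i|.
Proof.
move=> [f [Hd [Hn ->]]]; rewrite /valp; apply: ler_sum => i _.
apply: le_trans (ler_norm _) _; rewrite normrM normr_prod.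
apply: ler_piMr => //; apply: prodr_ile1 => j _.
by rewrite normr_ge0 /=; apply: unit_le1 (Hd j) (Hn j).
Qed.

Lemma Sv_hasub (p : {set {set 'I_k}}) : classical_sets.has_ubound (Sv p).
Proof. by exists (\sum_i `|A i|) => s; apply: Sv_ub. Qed.

Definition ind S (c : tidx d) : R := (agr (~: S) c z)%:R.

Lemma ind_dep S : dep S (ind S).
Proof.
move=> e e' H; rewrite /ind; congr (_%:R); congr (nat_of_bool _); apply/idP/idP => /agrP H'; apply/agrP => n nS.
- have nS' : n \in S by move: nS; rewrite inE negbK.
  by rewrite -H // H'.
- have nS' : n \in S by move: nS; rewrite inE negbK.
  by rewrite H // H'.
Qed.

Lemma ind_nrm S : nrm S (ind S) = 1.
Proof.
rewrite /nrm /ind; transitivity (\sum_(c | agr S c z) (agr (~: S) c z)%:R * (1:R)); last by rewrite sum_pinned.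
by apply: eq_bigr => c _; case: (agr _ _ _); rewrite /= ?mulr1n ?mulr0n ?expr1n ?expr0n ?mulr1.
Qed.


Lemma Sv_ne (p : {set {set 'I_k}}) : Sv p (valp (fun j => ind (blk p j))).
Proof.
by exists (fun j => ind (blk p j)); split; [|split] => // j; [apply: ind_dep | apply: ind_nrm].
Qed.

Lemma Sv_ge0 (p : {set {set 'I_k}}) : (0 < #|p|)%N -> 0 <= sup (Sv p).
Proof.
move=> H; pose j0 : 'I_#|p| := Ordinal H.
pose f := fun j => ind (blk p j).
pose f' := fun j => if j == j0 then (fun c => - ind (blk p j) c) else f j.
have ub := ub_le_sup (Sv_hasub p).
have h1 : valp f <= sup (Sv p) by apply: ub; apply: Sv_ne.
have h2 : valp f' <= sup (Sv p).
  apply: ub; exists f'; split; [|split] => // j; rewrite /f'; case: eqP => _.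
  - by move=> e e' He; congr (- _); apply: ind_dep.
  - exact: ind_dep.
  - by rewrite /nrm; under eq_bigr do rewrite sqrrN; apply: ind_nrm.
  - exact: ind_nrm.
have E : valp f' = - valp f.
  rewrite /valp -sumrN; apply: eq_bigr => i _.
  rewrite (bigD1 j0) //= [in RHS](bigD1 j0) //= /f' eqxx mulNr mulrN; congr (- (_ * (_ * _))).
  by apply: eq_bigr => j /negbTE ->.
lra.
Qed.

Lemma sqrt_prod (I : Type) (r : seq I) (P : pred I) (F : I -> R) :
  (forall i, P i -> 0 <= F i) ->
  Num.sqrt (\prod_(i <- r | P i) F i) = \prod_(i <- r | P i) Num.sqrt (F i).
Proof.
move=> H; elim: r => [|a r IH]; rewrite ?big_nil ?sqrtr1 // !big_cons.
by case: ifP => Pa //; rewrite sqrtrM ?IH //; apply: H.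
Qed.

Lemma homog (p : {set {set 'I_k}}) (w : 'I_#|p| -> tidx d -> R) :
  (forall j, dep (blk p j) (w j)) ->
  valp w <= sup (Sv p) * \prod_j Num.sqrt (nrm (blk p j) (w j)).
Proof.
move=> Hd.
have nrm_ge0 : forall j, 0 <= nrm (blk p j) (w j).
  by move=> j; apply: sumr_ge0 => c _; apply: sqr_ge0.
case: (boolP [exists j, nrm (blk p j) (w j) == 0]).
  case/existsP => j /eqP Hj.
  have w0 : forall i, w j i = 0.
    move=> i; have -> : w j i = w j (mrg (blk p j) i z).
      by apply: Hd => n nS; rewrite mrgE nS.
    have := sq_le_nrm (w j) (mrg_agr (blk p j) i); rewrite Hj => h.
    by apply/eqP; rewrite -sqrf_eq0 eq_le h sqr_ge0.
  rewrite (bigD1 j) //= Hj sqrtr0 mul0r mulr0 /valp big1 // => i _.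
  by rewrite (bigD1 j) //= w0 mul0r mulr0.
rewrite negb_exists => /forallP Hn.
have sp : forall j, 0 < Num.sqrt (nrm (blk p j) (w j)).
  by move=> j; rewrite sqrtr_gt0 lt_def Hn nrm_ge0.
pose f := fun j c => w j c / Num.sqrt (nrm (blk p j) (w j)).
have Hf : Sv p (valp f).
  exists f; split; [|split] => // j.
    by move=> e e' He; rewrite /f (Hd j e e' He).
  rewrite /nrm /f; under eq_bigr do rewrite expr_div_n.
  rewrite -mulr_suml -/(nrm _ _) sqr_sqrtr ?nrm_ge0 // divff //; exact: Hn.
have := ub_le_sup (Sv_hasub p) Hf.
have Pgt0 : 0 < \prod_j Num.sqrt (nrm (blk p j) (w j)) by apply: prodr_gt0 => j _.
have -> : valp f = valp w / \prod_j Num.sqrt (nrm (blk p j) (w j)).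
  rewrite /valp mulr_suml; apply: eq_bigr => i _; rewrite -mulrA; congr (_ * _).
  by rewrite /f big_split /= prodfV.
by rewrite ler_pdivrMr.
Qed.

End Bridge.


Section Part.
Variables (k : nat) (p : {set {set 'I_k}}) (Hp : partition p [set: 'I_k]).

Lemma blk_cover n : exists j, n \in blk p j.
Proof.
case/and3P: Hp => /eqP cov _ _.
have : n \in cover p by rewrite cov inE.
case/bigcupP => B Bp nB; exists (enum_rank_in Bp B).
by rewrite /blk enum_rankK_in.
Qed.

Lemma blk_disj j j' n : j != j' -> n \in blk p j -> n \notin blk p j'.
Proof.
case/and3P: Hp => _ /trivIsetP tr _ jj' nj.
have ne : blk p j != blk p j'.
  by apply: contra jj' => /eqP /enum_val_inj ->.
by rewrite (disjointFr (tr _ _ (enum_valP j) (enum_valP j') ne) nj).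
Qed.

Lemma blk_ne0 j : exists n, n \in blk p j.
Proof.
case/and3P: Hp => _ _ n0.
have : blk p j != set0 by apply: contraNneq n0 => <-; apply: enum_valP.
by case/set0Pn => n; exists n.
Qed.
End Part.

Section Agr.
Variables (k : nat) (d : 'I_k -> nat).
Lemma agr_sym (S : {set 'I_k}) (e c : tidx d) : agr S e c = agr S c e.
Proof. by apply/idP/idP => /agrP H; apply/agrP => n nS; rewrite H. Qed.

Lemma agr_congr (S : {set 'I_k}) (e e' c : tidx d) : (forall n, n \notin S -> e n = e' n) ->
  agr S e c = agr S e' c.
Proof.
by move=> H; apply/idP/idP => /agrP H'; apply/agrP => n nS; rewrite -H'// H.
Qed.
End Agr.

Lemma amgm (R : realType) (x t : R) : 0 <= x -> 0 < t ->
  Num.sqrt x <= (x * t + t^-1) / 2.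
Proof.
move=> hx ht; set q := Num.sqrt x.
have E : x * t + t^-1 - 2 * q = t^-1 * (q * t - 1) ^+ 2.
  rewrite -[x](sqr_sqrtr hx) -/q; field; exact: lt0r_neq0.
have : 0 <= t^-1 * (q * t - 1) ^+ 2 by rewrite mulr_ge0 ?sqr_ge0 ?invr_ge0 ?ltW.
rewrite -E; lra.
Qed.

Section Core.
Variables (R : realType) (k : nat) (d : 'I_k -> nat) (A : tidx d -> R) (z : tidx d).
Variables (p q : {set {set 'I_k}}) (Hp : partition p [set: 'I_k])
  (Hq : partition q [set: 'I_k]) (star : 'I_#|p| -> 'I_#|q|).

Lemma core s : 0 <= sup (Sv A z q) -> Sv A z p s ->
  s <= sup (Sv A z q) *
       \prod_b Num.sqrt ((\prod_(n in blk p b :\: blk q (star b)) d n)%:R).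
Proof.
move=> sup0 [g [Hd [Hn ->]]].
pose Q := blk p; pose P := blk q.
pose V := \bigcup_b (Q b :&: P (star b)).
pose U := ~: V.
have KV : forall b n, n \in Q b -> (n \in V) = (n \in P (star b)).
  move=> b n nQ; apply/bigcupP/idP => [[b' _]|nP]; last by exists b; rewrite // inE nQ nP.
  rewrite inE => /andP[nQ' nP']; case: (eqVneq b b') => [-> //|bb'].
  by move: (blk_disj Hp bb' nQ); rewrite nQ'.
have step1 : valp A g = \sum_(c | agr U c z)
    \sum_i A i * ((agr (~: U) c i)%:R * \prod_b g b (mrg V i c)).
  rewrite /valp exchange_big /=; apply: eq_bigr => i _; rewrite -mulr_sumr; congr (_ * _).
  rewrite (sum_pinned z U i (fun c => \prod_b g b (mrg V i c))).
  apply: eq_bigr => b _; congr (g b _); apply/ffunP => n.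
  by rewrite !mrgE inE; case: (n \in V).
pose w := fun c j i => (agr (~: (U :&: P j)) i c)%:R *
   \prod_(b | star b == j) g b (mrg V i c) : R.
have ind_prod : forall i c : tidx d, (agr (~: U) i c)%:R = \prod_j (agr (~: (U :&: P j)) i c)%:R :> R.
  move=> i c; case: (boolP (agr (~: U) i c)) => H.
    rewrite big1 // => j _; suff -> : agr (~: (U :&: P j)) i c by [].
    apply/agrP => n; rewrite inE negbK inE => /andP[nU _]; move/agrP: H; apply.
    by rewrite inE negbK.
  have [n nU ne] : exists2 n, n \in U & i n != c n.
    move: H; rewrite /agr negb_forall => /existsP[n].
    by rewrite negb_or inE negbK => /andP[nU ne]; exists n.
  have [j nP] := blk_cover Hq n.
  rewrite (bigD1 j) //=; suff -> : agr (~: (U :&: P j)) i c = false by rewrite mul0r.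
  apply/negP => /agrP H'; move: ne; rewrite H' ?eqxx // inE negbK inE nU; exact: nP.
have step2 : forall c i : tidx d, (agr (~: U) c i)%:R * \prod_b g b (mrg V i c) = \prod_j w c j i.
  move=> c i; rewrite agr_sym ind_prod (partition_big star xpredT) //= -big_split /=.
  by apply: eq_bigr.
have wdep : forall c j, dep (P j) (w c j).
  move=> c j e e' H; rewrite /w; congr (_ * _).
    rewrite (agr_congr _ (e' := e')) // => n; rewrite inE negbK inE => /andP[_ nP].
    exact: H.
  apply: eq_bigr => b /eqP sb; apply: Hd => n nQ; rewrite !mrgE; case: ifP => // nV.
  by apply: H; rewrite -sb -(KV b n nQ).
have step12 : valp A g = \sum_(c | agr U c z) valp A (w c).
  rewrite step1; apply: eq_bigr => c _; rewrite /valp; apply: eq_bigr => i _.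
  by rewrite step2.
pose W := fun b => Q b :&: P (star b).
pose X := fun b => Q b :\: P (star b).
pose fib := fun b c => \sum_(e | agr (W b) e z) g b (mrg V e c) ^+ 2.
have fib_ge0 : forall b c, 0 <= fib b c.
  by move=> b c; apply: sumr_ge0 => e _; apply: sqr_ge0.
have step4 : forall c j, nrm z (P j) (w c j) = \prod_(b | star b == j) fib b c.
  move=> c j.
  pose T := U :&: P j; pose Rj := V :&: P j.
  have ET : T :|: Rj = P j.
    by apply/setP => n; rewrite !inE; case: (n \in V); case: (n \in P j).
  rewrite /nrm (eq_bigl (fun e => agr (T :|: Rj) e z)); last by move=> e; rewrite ET.
  rewrite sum_merge; last by move=> n; rewrite !inE => /andP[nV _]; rewrite (negbTE nV).
  transitivity (\sum_(e1 | agr T e1 z) (agr (~: T) e1 c)%:R *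
     \sum_(e2 | agr Rj e2 z) (\prod_(b | star b == j) g b (mrg V (mrg T e1 e2) c)) ^+ 2).
    apply: eq_bigr => e1 _; rewrite mulr_sumr; apply: eq_bigr => e2 _.
    rewrite /w exprMn; congr (_ * _).
    rewrite (agr_congr _ (e' := e1)); last by move=> n; rewrite inE negbK => nT; rewrite mrgE nT.
    by case: (agr _ _ _); rewrite /= ?mulr1n ?mulr0n ?expr1n ?expr0n.
  rewrite (sum_pinned z T c (fun e1 => \sum_(e2 | agr Rj e2 z)
     (\prod_(b | star b == j) g b (mrg V (mrg T e1 e2) c)) ^+ 2)).
  have EM : forall e2, mrg V (mrg T (mrg T c z) e2) c = mrg V e2 c.
    by move=> e2; apply/ffunP => n; rewrite !mrgE !inE; case nV : (n \in V).
  rewrite (eq_bigr (fun e2 => \prod_(b | star b == j) g b (mrg V e2 c) ^+ 2)); last first.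
    move=> e2 _; rewrite prodrXl; congr (_ ^+ 2); apply: eq_bigr => b _; congr (g b _); exact: EM.
  have ER : Rj = \bigcup_(b | star b == j) W b.
    apply/setP => n; rewrite !inE; apply/andP/bigcupP => [[nV nP]|[b /eqP sb]].
      move/bigcupP: nV => [b _]; rewrite inE => /andP[nQ nPb].
      exists b; last by rewrite inE nQ nPb.
      case: (eqVneq (star b) j) => // ne.
      by move: (blk_disj Hq ne nPb); rewrite nP.
    rewrite inE => /andP[nQ nPb]; split; last by rewrite -sb.
    by apply/bigcupP; exists b => //; rewrite inE nQ nPb.
  rewrite ER (sum_prod_fin (P := fun b => star b == j) (W := W)
                (h := fun b e => g b (mrg V e c) ^+ 2) z) //.
  - move=> a b _ _ ab n; rewrite !inE => /andP[na _]; apply/negP => /andP[nb _].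
    by move: (blk_disj Hp ab na); rewrite nb.
  - move=> b _ e e' H; congr (_ ^+ 2); apply: Hd => n nQ; rewrite !mrgE; case: ifP => // nV.
    by apply: H; rewrite inE nQ -(KV b n nQ) nV.
have step5 : \sum_(c | agr U c z) \prod_b Num.sqrt (fib b c) =
             \prod_b \sum_(c | agr (X b) c z) Num.sqrt (fib b c).
  have EU : U = \bigcup_(b | xpredT b) X b.
    apply/setP => n; rewrite inE; apply/idP/bigcupP => [nV|[b _]].
      have [b nQ] := blk_cover Hp n; exists b => //.
      by rewrite inE nQ andbT -(KV b n nQ).
    by rewrite inE => /andP[nP nQ]; rewrite (KV b n nQ).
  rewrite EU (sum_prod_fin (P := xpredT) (W := X)
                (h := fun b c => Num.sqrt (fib b c)) z) //.
  - move=> a b _ _ ab n; rewrite !inE => /andP[_ na]; apply/negP => /andP[_ nb].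
    by move: (blk_disj Hp ab na); rewrite nb.
  - move=> b _ c c' H; congr (Num.sqrt _); apply: eq_bigr => e _.
    congr (_ ^+ 2); apply: Hd => n nQ; rewrite !mrgE; case: ifP => // nV.
    by apply: H; rewrite inE nQ andbT -(KV b n nQ) nV.
have step6 : forall b, \sum_(c | agr (X b) c z) Num.sqrt (fib b c) <=
                      Num.sqrt ((\prod_(n in X b) d n)%:R).
  move=> b.
  have S1 : \sum_(c | agr (X b) c z) fib b c = 1.
    rewrite /fib exchange_big /=.
    transitivity (\sum_(e | agr (W b) e z) \sum_(c | agr (X b) c z) g b (mrg (W b) e c) ^+ 2).
      apply: eq_bigr => e _; apply: eq_bigr => c _; congr (_ ^+ 2).
      by apply: Hd => n nQ; rewrite !mrgE /W inE nQ /= (KV b n nQ).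
    rewrite -(sum_merge z (fun x => g b x ^+ 2)); last first.
      by move=> n; rewrite !inE => /andP[_ nP]; rewrite nP.
    rewrite (eq_bigl (fun e => agr (Q b) e z)); last by move=> e; rewrite setID.
    exact: Hn b.
  have S2 : \sum_(c | agr (X b) c z) (1:R) = (\prod_(n in X b) d n)%:R := card_agr R (X b) z.
  set N := (\prod_(n in X b) d n)%:R in S2 *.
  have N1 : 1 <= N.
    rewrite -S2 (bigD1 z) /=; last by apply/agrP.
    by rewrite lerDl; apply: sumr_ge0.
  set t := Num.sqrt N.
  have t0 : 0 < t by rewrite sqrtr_gt0; lra.
  apply: le_trans (ler_sum _ (fun c _ => amgm (fib_ge0 b c) t0)) _.
  rewrite -mulr_suml big_split /= -mulr_suml S1.
  have S3 : \sum_(c | agr (X b) c z) t^-1 = N * t^-1.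
    by rewrite -S2 mulr_suml; apply: eq_bigr => c _; rewrite mul1r.
  rewrite S3; have -> : N = t ^+ 2 by rewrite sqr_sqrtr //; lra.
  rewrite le_eqVlt; apply/orP; left; apply/eqP; field; exact: lt0r_neq0.
rewrite step12.
apply: le_trans (ler_sum _ (fun c _ => homog A z (wdep c))) _.
have E7 : forall c, \prod_j Num.sqrt (nrm z (blk q j) (w c j)) = \prod_b Num.sqrt (fib b c).
  move=> c; symmetry; rewrite (partition_big star xpredT (F := fun b => Num.sqrt (fib b c))) //=.
  apply: eq_bigr => j _; rewrite step4 sqrt_prod // => b _; exact: fib_ge0.
rewrite (eq_bigr (fun c => sup (Sv A z q) * \prod_b Num.sqrt (fib b c))); last by move=> c _; rewrite E7.
rewrite -mulr_sumr step5; apply: ler_wpM2l => //.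
apply: ler_prod => b _; apply/andP; split; last exact: step6.
by apply: sumr_ge0 => c _; apply: sqrtr_ge0.
Qed.
End Core.

Section Const.
Variables (R : realType) (k : nat) (d : 'I_k -> nat) (dpos : forall n, (0 < d n)%N).
Variables (p q : {set {set 'I_k}}) (Hp : partition p [set: 'I_k])
  (Hq : partition q [set: 'I_k]) (kpos : (0 < k)%N).

Lemma const_eq : exists star : 'I_#|p| -> 'I_#|q|,
  \prod_b Num.sqrt ((\prod_(n in blk p b :\: blk q (star b)) d n)%:R) =
    Num.sqrt ((tdim d)%:R / (dimA d p q)%:R) :> R /\
  0 < Num.sqrt ((tdim d)%:R / (dimA d p q)%:R) :> R.
Proof.
have [j0 _] := blk_cover Hq (Ordinal kpos).
pose star := fun b : 'I_#|p| => [arg max_(j > j0) DA d (blk p b) (blk q j)].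
pose Mb := fun b => (\prod_(n in blk p b :&: blk q (star b)) d n)%N.
pose Nb := fun b => (\prod_(n in blk p b :\: blk q (star b)) d n)%N.
have Etdim : tdim d = (\prod_b Mb b * \prod_b Nb b)%N.
  rewrite -big_split /= /tdim.
  have cov : cover p = [set: 'I_k] by case/and3P: Hp => /eqP.
  have triv : trivIset p by case/and3P: Hp.
  rewrite (eq_bigl (fun n => n \in cover p)); last by move=> n; rewrite cov inE.
  rewrite big_trivIset // big_enum_val; apply: eq_bigr => b _.
  rewrite (bigID (fun n => n \in blk q (star b))) /=; congr (_ * _)%N.
    by apply: eq_bigl => n; rewrite inE.
  by apply: eq_bigl => n; rewrite inE andbC.
have Emax : forall b, (\big[maxn/0%N]_(B' in q) DA d (blk p b) B' = Mb b)%N /\ (0 < Mb b)%N.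
  move=> b.
  have Hm := bigop.bigmax_eq_arg j0 (P := xpredT) (F := fun j => DA d (blk p b) (blk q j)) isT.
  have -> : (\big[maxn/0%N]_(B' in q) DA d (blk p b) B' = DA d (blk p b) (blk q (star b)))%N.
    by rewrite big_enum_val; exact: Hm.
  have [n nQ] := blk_ne0 Hp b.
  have [j' nP] := blk_cover Hq n.
  have pos' : (0 < DA d (blk p b) (blk q j'))%N.
    rewrite /DA; case: ifP => [/eqP H|_]; last by apply: prodn_gt0.
    by move/setP: H => /(_ n); rewrite !inE nQ nP.
  have le : (DA d (blk p b) (blk q j') <= DA d (blk p b) (blk q (star b)))%N.
    rewrite -[X in (_ <= X)%N]Hm.
    exact: (bigop.leq_bigmax (F := fun j => DA d (blk p b) (blk q j))).
  have pos : (0 < DA d (blk p b) (blk q (star b)))%N by apply: leq_trans le.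
  move: pos; rewrite /DA; case: ifP => // _ pos; split => //.
have EdimA : dimA d p q = (\prod_b Mb b)%N.
  by rewrite /dimA big_enum_val; apply: eq_bigr => b _; case: (Emax b).
have Mpos : (0 < \prod_b Mb b)%N by apply: prodn_gt0 => b; case: (Emax b).
have Npos : (0 < \prod_b Nb b)%N by apply: prodn_gt0 => b; apply: prodn_gt0.
have E : (tdim d)%:R / (dimA d p q)%:R = (\prod_b Nb b)%:R :> R.
  rewrite Etdim EdimA natrM mulrC mulKf //; by rewrite pnatr_eq0 -lt0n.
exists star; rewrite E; split.
  rewrite natr_prod sqrt_prod //.
by rewrite sqrtr_gt0 ltr0n.
Qed.
End Const.

Unset Implicit Arguments.

Theorem theorem4p8 (R : realType) (k : nat) (d : 'I_k -> nat)
    (A : tidx d -> R) (p1 p2 : {set {set 'I_k}}) :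
  (forall n, 0 < d n)%N ->
  partition p1 [set: 'I_k] -> partition p2 [set: 'I_k] ->
  (Num.sqrt ((tdim d)%:R / (dimA d p1 p2)%:R))^-1 * spec_norm (unfold p1 A)
    <= spec_norm (unfold p2 A) /\
  spec_norm (unfold p2 A)
    <= Num.sqrt ((tdim d)%:R / (dimA d p2 p1)%:R) * spec_norm (unfold p1 A).
Proof.
move=> dpos Hp1 Hp2.
case: (posnP k) => [k0|kpos].
  have nok : forall n : 'I_k, False by case=> n; rewrite k0.
  have E0 : forall p : {set {set 'I_k}}, partition p [set: 'I_k] -> p = set0.
    move=> p /and3P[_ _ n0]; apply/setP => B; rewrite inE; apply/negbTE.
    have -> : B = set0 by apply/setP => n; case: (nok n).
    exact: n0.
  rewrite (E0 _ Hp1) (E0 _ Hp2).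
  have -> : tdim d = 1%N by rewrite /tdim big_pred0 // => n; case: (nok n).
  have -> : dimA d set0 set0 = 1%N by rewrite /dimA big_pred0 // => B; rewrite inE.
  by rewrite divr1 sqrtr1 invr1 !mul1r.
pose z : tidx d := finfun (fun n => Ordinal (dpos n)).
rewrite !(spec_Sv A z).
have cardpos : forall p : {set {set 'I_k}}, partition p [set: 'I_k] -> (0 < #|p|)%N.
  move=> p Hp; have [j _] := blk_cover Hp (Ordinal kpos).
  exact: leq_ltn_trans (leq0n j) (ltn_ord j).
have bound : forall p q : {set {set 'I_k}}, partition p [set: 'I_k] -> partition q [set: 'I_k] ->
    sup (Sv A z p) <= Num.sqrt ((tdim d)%:R / (dimA d p q)%:R) * sup (Sv A z q) /\
    0 < Num.sqrt ((tdim d)%:R / (dimA d p q)%:R) :> R.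
  move=> p q Hp Hq.
  have [star [Es Epos]] := const_eq R dpos Hp Hq kpos.
  split => //; apply: ge_sup; first by exists (valp A (fun j => ind R z (blk p j))); apply: Sv_ne.
  move=> s Hs; rewrite -Es mulrC.
  exact: (core Hp Hq star (Sv_ge0 A z (cardpos q Hq)) Hs).
have [b21 _] := bound p2 p1 Hp2 Hp1.
have [b12 pos12] := bound p1 p2 Hp1 Hp2.
split => //.
by rewrite ler_pdivrMl.
Qed.
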